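(* Let $n\geq 2$ and let $X\subsetneq Z\subseteq[n]$ with $|Z|\geq |X|+2$. If $W\subseteq[n]$ satisfies $W\notin \mathcal{B}_{[\emptyset,X]}\cup\mathcal{B}_{[Z,[n]]}$, then there exists $W_0$ with $X\subsetneq W_0\subsetneq Z$ and $|W_0|=|X|+1$ such that $W_0$ and $W$ are incomparable.
   Context: $\mathcal{B}_{[X,Y]}=\{U: X\subseteq U\subseteq Y\}$ for subsets $X\subseteq Y$ of $[n]$. *)

(* Defs.v *)
From mathcomp Require Import all_boot.
Set Implicit Arguments. Unset Strict Implicit. Unset Printing Implicit Defensive.

Definition Bint (n : nat) (X Y : {set 'I_n}) : {set {set 'I_n}} :=
  [set U : {set 'I_n} | (X \subset U) && (U \subset Y)].

Definition incomparable (n : nat) (A B : {set 'I_n}) : bool :=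
  ~~ (A \subset B) && ~~ (B \subset A).

(* Main.v *)
Require Import Defs.
From mathcomp Require Import all_boot zify.

Lemma build (n : nat) (X Z W : {set 'I_n}) (c : 'I_n) :
  X \subset Z -> #|X| + 2 <= #|Z| -> c \in Z -> c \notin X ->
  ~~ (c |: X \subset W) -> ~~ (W \subset c |: X) ->
  exists W0 : {set 'I_n},
    [/\ X \proper W0, W0 \proper Z, #|W0| = #|X| + 1 & incomparable W0 W].
Proof.
move=> sXZ hc cZ cX h1 h2; exists (c |: X).
have hcard : #|c |: X| = #|X| + 1 by rewrite cardsU1 cX addnC.
split => //.
- rewrite properEcard hcard addn1 ltnSn andbT; exact: subsetUr.
- rewrite properEcard hcard; apply/andP; split; last by lia.
  by apply/subsetP => x; rewrite !inE => /orP [/eqP -> //| /(subsetP sXZ)].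
- by rewrite /incomparable h1 h2.
Qed.

Theorem lemma2p4 (n : nat) (X Z W : {set 'I_n}) :
  2 <= n ->
  X \proper Z ->
  #|X| + 2 <= #|Z| ->
  W \notin (Bint set0 X :|: Bint Z [set: 'I_n]) ->
  exists W0 : {set 'I_n},
    [/\ X \proper W0, W0 \proper Z, #|W0| = #|X| + 1 & incomparable W0 W].
Proof.
move=> _ /andP [sXZ _] hc; rewrite in_setU !inE sub0set subsetT andbT /= negb_or.
case/andP => /subsetPn [a aW aX] /subsetPn [b bZ bW].
have nWc : forall c, c != a -> c \notin X -> ~~ (W \subset c |: X).
  move=> c ca cX; apply/subsetPn; exists a => //.
  by rewrite !inE negb_or eq_sym ca aX.
case: (boolP (b \in X)) => bX.
  have : 0 < #|(Z :\: X) :\ a|.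
    have e := cardsD1 a (Z :\: X).
    have e2 : #|Z :\: X| = #|Z| - #|X| by rewrite cardsD (setIidPr sXZ).
    have : (a \in Z :\: X) <= 1 by case: (a \in _).
    move: e e2 hc; generalize (a \in Z :\: X) => t.
    move: #|Z :\: X| #|(Z :\: X) :\ a| #|Z| #|X| => p q r s.
    case: t => /=; lia.
  case/card_gt0P => c; rewrite !inE => /andP [ca /andP [cX cZ]].
  apply: (@build _ X Z W c sXZ hc cZ cX) => //; last exact: nWc.
  apply/subsetPn; exists b => //; by rewrite !inE bX orbT.
apply: (@build _ X Z W b sXZ hc bZ bX).
  by apply/subsetPn; exists b => //; rewrite !inE eqxx.
by apply: nWc => //; apply/eqP => eba; rewrite eba aW in bW.
Qed.
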